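(* Let $H=(V,E)$ be a finite hypergraph whose edges are non-empty and pairwise disjoint and whose union is $V$ (so every vertex has degree exactly 1; edges of size 1 are allowed). If both $|V|$ and $|E|$ are even and $|V|\not\equiv |E|\pmod 4$, then $H$ is not $\mathbb{Z}_2\times\mathbb{Z}_2$-cordial.
   Context: Let $A=\mathbb{Z}_2\times\mathbb{Z}_2$. For a hypergraph $H=(V,E)$ and a labeling $c:V\to A$, write $v_c(a)=|c^{-1}(a)|$; $c$ is $A$-friendly if $|v_c(a)-v_c(b)|\le 1$ for all $a,b\in A$. It induces $c^*:E\to A$, $c^*(e)=\sum_{v\in e}c(v)$; write $e_{c^*}(a)=|(c^* )^{-1}(a)|$. $H$ is $A$-cordial if it admits an $A$-friendly labeling $c$ with $|e_{c^*}(a)-e_{c^*}(b)|\le 1$ for all $a,b\in A$. *)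

(* Defs.v *)
From HB Require Import structures.
From mathcomp Require Import all_boot all_order all_algebra.
Set Implicit Arguments. Unset Strict Implicit. Unset Printing Implicit Defensive.
Import GRing.Theory.
Local Open Scope ring_scope.

Definition klein := ('Z_2 * 'Z_2)%type.

Definition close1 (m n : nat) : bool := ((m <= n.+1) && (n <= m.+1))%N.

Definition vcount (V : finType) (c : V -> klein) (a : klein) : nat :=
  #|[set v | c v == a]|.

Definition induced (V : finType) (c : V -> klein) (e : {set V}) : klein :=
  \sum_(v in e) c v.

Definition ecount (V : finType) (E : {set {set V}}) (c : V -> klein) (a : klein) : nat :=
  #|[set e in E | induced c e == a]|.

Definition friendly (V : finType) (c : V -> klein) : bool :=
  [forall a : klein, forall b : klein, close1 (vcount c a) (vcount c b)].

Definition cordial_labeling (V : finType) (E : {set {set V}}) (c : V -> klein) : Prop :=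
  friendly c /\ [forall a : klein, forall b : klein, close1 (ecount E c a) (ecount E c b)].

Definition A_cordial (V : finType) (E : {set {set V}}) : Prop :=
  exists c : V -> klein, cordial_labeling E c.

(* Main.v *)
Require Import Defs.
From mathcomp Require Import all_boot all_order all_algebra zify.
Import GRing.Theory.
Local Open Scope ring_scope.
Lemma z2 (x : 'Z_2) : x + x = 0.
Proof. apply/val_inj; case: x => [[|[|]]] //. Qed.
Lemma kk (a : klein) : a + a = 0.
Proof. case: a => x y. apply/eqP; rewrite /eq_op /=. by rewrite !z2. Qed.
Lemma modd (a : klein) n : a *+ n = a *+ odd n.
Proof. by rewrite {1}(divn_eq n 2) mulrnDr mulnC mulrnA mulr2n kk mul0rn add0r modn2. Qed.
Lemma key (n1 n2 n3 n4 : nat) :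
  close1 n1 n2 -> close1 n1 n3 -> close1 n1 n4 -> close1 n2 n3 -> close1 n2 n4 -> close1 n3 n4 ->
  ~~ odd (n1+n2+n3+n4) ->
 (((0,0) *+ n1 + (0,1) *+ n2 + (1,0)*+n3 + (1,1)*+n4 : klein) == 0) = ((n1+n2+n3+n4) %% 4 == 0)%N.
Proof.
rewrite /close1 (modd _ n1) (modd _ n2) (modd _ n3) (modd _ n4).
have h1 := modn2 n1; have h2 := modn2 n2; have h3 := modn2 n3; have h4 := modn2 n4.
move=> /andP[? ?] /andP[? ?] /andP[? ?] /andP[? ?] /andP[? ?] /andP[? ?] hs.
have hs' := modn2 (n1+n2+n3+n4); rewrite (negbTE hs) in hs'.
case: (odd n1) h1; case: (odd n2) h2; case: (odd n3) h3; case: (odd n4) h4 => /= h4 h3 h2 h1;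
  rewrite ?mulr1n ?mulr0n; match goal with |- ?l = _ => let v := eval vm_compute in l in change l with v end; symmetry; first [apply/eqP; lia | apply/negbTE/eqP; lia].
Qed.
Lemma ksum (R : nmodType) (F : klein -> R) : \sum_a F a = F (0,0) + F (0,1) + F (1,0) + F (1,1).
Proof. transitivity (\sum_(i : 'Z_2) \sum_(j : 'Z_2) F (i,j)).
  rewrite pair_bigA /=. by apply: eq_bigr => -[].
rewrite  /= !big_ord_recl !big_ord0 /=. rewrite !addr0 !addrA.
have e0 : (ord0 : 'Z_2) = 0 by apply/val_inj.
have e1 : (lift ord0 ord0 : 'Z_2) = 1 by apply/val_inj.
by rewrite e0 e1. Qed.
Lemma ksumn (F : klein -> nat) : (\sum_a F a = F (0,0)%R + F (0,1)%R + F (1,0)%R + F (1,1)%R)%N.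
Proof. transitivity (\sum_(i : 'Z_2) \sum_(j : 'Z_2) F (i,j))%N.
  rewrite pair_bigA /=. by apply: eq_bigr => -[].
rewrite  /= !big_ord_recl !big_ord0 /=. rewrite !addn0 !addnA.
have e0 : (ord0 : 'Z_2) = 0 by apply/val_inj.
have e1 : (lift ord0 ord0 : 'Z_2) = 1 by apply/val_inj.
by rewrite e0 e1. Qed.
Lemma cnt (X : finType) (S : {set X}) (g : X -> klein) :
  #|S| = (\sum_a #|[set x in S | g x == a]|)%N.
Proof.
rewrite -sum1_card (partition_big g predT) //; apply: eq_bigr => a _.
by rewrite -sum1_card; apply: eq_bigl => x; rewrite !inE.
Qed.
Lemma sm (X : finType) (S : {set X}) (g : X -> klein) :
  \sum_(x in S) g x = \sum_(a : klein) a *+ #|[set x in S | g x == a]|.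
Proof.
rewrite (partition_big g predT) //; apply: eq_bigr => a _.
rewrite -sumr_const; apply: eq_big => x; first by rewrite !inE.
by rewrite andbC => /andP[/eqP].
Qed.
Lemma main4 (X : finType) (S : {set X}) (g : X -> klein) :
  [forall a : klein, forall b : klein,
     close1 #|[set x in S | g x == a]| #|[set x in S | g x == b]|] ->
  ~~ odd #|S| -> (\sum_(x in S) g x == 0) = (#|S| %% 4 == 0)%N.
Proof.
move=> /forallP H; rewrite sm (cnt _ S g) !ksum => hs.
have hc : forall a b : klein, close1 #|[set x in S | g x == a]| #|[set x in S | g x == b]|.
  move=> a b; exact: (forallP (H a) b).
by apply: key; try exact: hc.
Qed.

Local Close Scope ring_scope.
Theorem proposition5 (V : finType) (E : {set {set V}}) :
  (forall e, e \in E -> e != set0) ->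
  (forall e f, e \in E -> f \in E -> e != f -> [disjoint e & f]) ->
  cover E = [set: V] ->
  ~~ odd #|V| -> ~~ odd #|E| ->
  #|V| %% 4 != #|E| %% 4 ->
  ~ A_cordial E.
Proof.
move=> _ hdis hcov hV hE hne [c [hf he]].
have tE : trivIset E by apply/trivIsetP.
have hsum : (\sum_(v in [set: V]) c v = \sum_(e in E) induced c e)%R.
  by rewrite -hcov big_trivIset.
have hv : [forall a : klein, forall b : klein,
     close1 #|[set x in [set: V] | c x == a]| #|[set x in [set: V] | c x == b]|].
  apply/forallP => a; apply/forallP => b.
  have eq : forall a, [set x in [set: V] | c x == a] = [set v | c v == a].
    by move=> a'; apply/setP => x; rewrite !inE.
  rewrite !eq; exact: (forallP (forallP hf a) b).
have H1 := main4 _ _ _ hv; rewrite cardsT in H1; have {}H1 := H1 hV.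
have H2 := main4 _ _ _ he hE.
rewrite hsum H2 in H1.
have hV' := modn2 #|V|; have hE' := modn2 #|E|.
rewrite (negbTE hV) in hV'; rewrite (negbTE hE) in hE'.
move: hV' hE'; rewrite /nat_of_bool => hV' hE'.
move: H1 hne. case: (@eqP _ (#|V| %% 4) 0); case: (@eqP _ (#|E| %% 4) 0) => h2 h1 hb; try discriminate hb. all: move/negP; apply; apply/eqP; clear -hV' hE' h1 h2; move: hV' hE' h1 h2; generalize #|V| #|E| => n m; lia.
Qed.
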